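(* The ladder chain $L(2,2,\sqrt2-1)$ is recurrent; that is, if $\mathbf{S}=(S_n:n\ge1)\sim L(2,2,\sqrt2-1)$ then $\mathbb{P}(S_n\neq 0\text{ for all }n\ge1)=0$.
   Context: Ladder chain: let $\xi_1,\xi_2,\dots$ be i.i.d. with values in $\{1,-1\}$, $\mathbb{P}(\xi_i=1)=p$, $\mathbb{P}(\xi_i=-1)=1-p$, and let $r,s$ be positive integers. Define $X_k=-1$ if $\xi_k=-1$; $X_k=s$ if $k\ge r$ and $\xi_k=\xi_{k-1}=\dots=\xi_{k-r+1}=1$; and $X_k=1$ otherwise. Let $S_n=X_1+\dots+X_n$. The process $\mathbf{S}=(S_n:n\ge1)$ is a ladder chain of order $r$, step $s$, probability $p$, written $\mathbf{S}\sim L(r,s,p)$. A ladder chain is transient if $\mathbb{P}(S_n\neq0\text{ for all }n\ge1)>0$, and recurrent otherwise. *)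

(* Defs.v *)
From HB Require Import structures.
From mathcomp Require Import all_boot all_order all_algebra.
From mathcomp Require Import all_classical all_reals all_analysis.
Set Implicit Arguments. Unset Strict Implicit. Unset Printing Implicit Defensive.
Import Order.TTheory GRing.Theory Num.Theory.
Local Open Scope classical_set_scope.
Local Open Scope ring_scope.

Definition mutually_independent d (T : measurableType d) (R : realType)
  (P : probability T R) (xi : nat -> T -> R) : Prop :=
  forall (I : seq nat) (B : nat -> set R), uniq I ->
    (forall i, i \in I -> measurable (B i)) ->
    P (\bigcap_(i in [set` I]) (xi i @^-1` B i)) =
    (\big[*%E/1%E]_(i <- I) P (xi i @^-1` B i))%E.

(* The coin sequence is 0-based:
   e j stands for xi_{j+1}.  ladder_X r s e k stands for X_{k+1}:
   X_{k+1} = -1 if xi_{k+1} = -1;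
           = s  if k+1 >= r and xi_{k+1} = ... = xi_{k-r+2} = 1;
           = 1  otherwise. *)
Definition ladder_X (R : realType) (r s : nat) (e : nat -> R) (k : nat) : R :=
  if e k == -1 then -1
  else if (r <= k.+1)%N && [forall j : 'I_r, e (k - j)%N == 1] then s%:R
  else 1.

Definition ladder_S (R : realType) (r s : nat) (e : nat -> R) (n : nat) : R :=
  \sum_(k < n) ladder_X r s e k.

(* Main.v *)
Require Import Defs.
From HB Require Import structures.
From mathcomp Require Import all_boot all_order all_algebra.
From mathcomp Require Import all_classical all_reals all_analysis.
From mathcomp Require Import zify ring lra.
Import Order.TTheory GRing.Theory Num.Theory.
Local Open Scope classical_set_scope.
Local Open Scope ring_scope.
Set Implicit Arguments. Unset Strict Implicit. Unset Printing Implicit Defensive.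

Definition pp (R : rcfType) : R := Num.sqrt 2 - 1.

Section Discrete.
Variable R : rcfType.
Local Notation p := (pp R).

Lemma p_facts : 0 < p /\ p < 1 /\ p ^+ 2 + 2 * p = 1.
Proof.
have s2 : Num.sqrt (2:R) ^+ 2 = 2 by rewrite sqr_sqrtr // ler0n.
have s0 : 0 <= Num.sqrt (2:R) by apply: sqrtr_ge0.
rewrite /pp; split; last split.
- nra.
- nra.
- nra.
Qed.

Lemma p_gt0 : 0 < p. Proof. by case: p_facts. Qed.
Lemma p_lt1 : p < 1. Proof. by case: p_facts => _ []. Qed.
Lemma p_eq : p ^+ 2 + 2 * p = 1. Proof. by case: p_facts => _ []. Qed.

Fixpoint ES (N : nat) (F : seq bool -> R) : R :=
  match N with
  | 0 => F [::]
  | N'.+1 => p * ES N' (fun s => F (true :: s)) + (1 - p) * ES N' (fun s => F (false :: s))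
  end.

Lemma ES_ext N F G : (forall s, size s = N -> F s = G s) -> ES N F = ES N G.
Proof.
elim: N F G => [|N IH] F G H /=; first by apply: H.
by congr (_ * _ + _ * _); apply: IH => s Hs; apply: H; rewrite /= Hs.
Qed.

Lemma ES_le N F G : (forall s, size s = N -> F s <= G s) -> ES N F <= ES N G.
Proof.
have hp := p_gt0; have hp1 := p_lt1.
elim: N F G => [|N IH] F G H /=; first by apply: H.
have h1 : ES N (fun s => F (true :: s)) <= ES N (fun s => G (true :: s)).
  by apply: IH => s Hs; apply: H; rewrite /= Hs.
have h2 : ES N (fun s => F (false :: s)) <= ES N (fun s => G (false :: s)).
  by apply: IH => s Hs; apply: H; rewrite /= Hs.
nra.
Qed.

Lemma ES_const N c : ES N (fun _ => c) = c.
Proof. elim: N => [|N IH] //=; rewrite IH; ring. Qed.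

Lemma ES_add N F G : ES N (fun s => F s + G s) = ES N F + ES N G.
Proof. elim: N F G => [|N IH] F G //=; rewrite !IH; ring. Qed.

Lemma ES_scale N c F : ES N (fun s => c * F s) = c * ES N F.
Proof. elim: N F => [|N IH] F //=; rewrite !IH; ring. Qed.

Lemma ES_addc N c F : ES N (fun s => c + F s) = c + ES N F.
Proof. by rewrite ES_add ES_const. Qed.

Definition up (q : bool) : int := if q then 2 else 1.
Definition nxt (h : int) (q c : bool) : int := if c then h + up q else h - 1.

Fixpoint ok (h : int) (q : bool) (s : seq bool) : bool :=
  if s is c :: s' then (nxt h q c != 0) && ok (nxt h q c) c s' else true.
Fixpoint posok (h : int) (q : bool) (s : seq bool) : bool :=
  if s is c :: s' then (0 < nxt h q c) && posok (nxt h q c) c s' else true.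
Fixpoint negok (h : int) (q : bool) (s : seq bool) : bool :=
  if s is c :: s' then (nxt h q c < 0) && negok (nxt h q c) c s' else true.
Fixpoint fin (D : pred int) (h : int) (q : bool) (s : seq bool) : int * bool :=
  if s is c :: s' then (if D h then fin D (nxt h q c) c s' else (h, q)) else (h, q).
Fixpoint acc (D : pred int) (f : int -> bool -> R) (h : int) (q : bool) (s : seq bool) : R :=
  if s is c :: s' then (if D h then f h q + acc D f (nxt h q c) c s' else 0) else 0.

Definition dlt (g : int -> bool -> R) (h : int) (q : bool) : R :=
  p * g (nxt h q true) true + (1 - p) * g (nxt h q false) false - g h q.

Lemma ES_fin D g N h q :
  ES N (fun s => g (fin D h q s).1 (fin D h q s).2) = g h q + ES N (acc D (dlt g) h q).
Proof.
elim: N h q => [|N IH] h q /=; first by rewrite addr0.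
case Dh: (D h) => /=.
- by rewrite !IH !ES_addc /dlt /nxt /=; ring.
- by rewrite !ES_const; ring.
Qed.


Definition M (h : int) (q : bool) : R := h%:~R + (if q then p else 0).
Definition M2 (h : int) (q : bool) : R := M h q ^+ 2.

Lemma dltM h q : dlt M h q = 0.
Proof.
have := p_eq; rewrite /dlt /M /nxt /up; case: q => /=; rewrite ?intrD ?intrB /=;
  set x := h%:~R => E; nra.
Qed.

Lemma dltM2 h q : 1 <= dlt M2 h q.
Proof.
have E := p_eq; have hp := p_gt0; have hp1 := p_lt1.
rewrite /dlt /M2 /M /nxt /up; case: q => /=; rewrite ?intrD ?intrB /=; set x := h%:~R.
- have -> : p * (x + 2%:~R + p) ^+ 2 + (1 - p) * (x - 1%:~R + 0) ^+ 2 - (x + p) ^+ 2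
     = 4 * p + (1 - p) * (1 + p) ^+ 2 + 2 * (x + p) * (p ^+ 2 + 2 * p - 1).
    rewrite /=; ring.
  rewrite E subrr mulr0 addr0; nra.
- have -> : p * (x + 1%:~R + p) ^+ 2 + (1 - p) * (x - 1%:~R + 0) ^+ 2 - (x + 0) ^+ 2
     = p * (1 + p) ^+ 2 + (1 - p) + 2 * x * (p ^+ 2 + 2 * p - 1).
    rewrite /=; ring.
  rewrite E subrr mulr0 addr0; nra.
Qed.

Lemma acc_ge0 D f h q s : (forall h q, 0 <= f h q) -> 0 <= acc D f h q s.
Proof.
move=> Hf; elim: s h q => [|c s IH] h q //=; case: (D h) => //.
by apply: addr_ge0.
Qed.

Lemma acc_zero D f h q s : (forall h q, f h q = 0) -> acc D f h q s = 0.
Proof.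
move=> Hf; elim: s h q => [|c s IH] h q //=; case: (D h) => //.
by rewrite Hf IH add0r.
Qed.

Lemma fin_inv (Pinv : int -> bool -> Prop) (D : pred int) h q (s : seq bool) :
  (forall h q c, D h -> Pinv h q -> Pinv (nxt h q c) c) -> Pinv h q ->
  Pinv (fin D h q s).1 (fin D h q s).2.
Proof.
move=> HP; elim: s h q => [|c s IH] h q //= H0.
case Dh: (D h) => //=; apply: IH; exact: HP.
Qed.

Lemma ES_ge0 N F : (forall s, size s = N -> 0 <= F s) -> 0 <= ES N F.
Proof. by move=> H; rewrite -(ES_const N 0); apply: ES_le. Qed.

Lemma lin_id D N h q : ES N (fun s => M (fin D h q s).1 (fin D h q s).2) = M h q.
Proof.
rewrite ES_fin (ES_ext (G := fun _ => 0)) ?ES_const ?addr0 // => s _.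
by apply: acc_zero => ??; apply: dltM.
Qed.

Lemma quad_bound (D : pred int) (K : nat) N h q :
  (forall x, D x -> (- K%:Z < x) && (x < K%:Z)) ->
  (- K%:Z <= h) && (h <= K%:Z + 1) ->
  ES N (acc D (dlt M2) h q) <= (K%:R + 2) ^+ 2.
Proof.
move=> HD Hh.
have := ES_fin D M2 N h q.
have -> : M2 h q + ES N (acc D (dlt M2) h q) = ES N (acc D (dlt M2) h q) + M2 h q by rewrite addrC.
move/eqP; rewrite -subr_eq => /eqP <-.
have h0 : 0 <= M2 h q by rewrite /M2 sqr_ge0.
have : ES N (fun s => M2 (fin D h q s).1 (fin D h q s).2) <= (K%:R + 2) ^+ 2.
  rewrite -[X in _ <= X](ES_const N); apply: ES_le => s _.
  have Hinv : forall x y c, D x -> (fun x (_ : bool) => (- K%:Z <= x) && (x <= K%:Z + 1)) x y ->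
     (fun x (_ : bool) => (- K%:Z <= x) && (x <= K%:Z + 1)) (nxt x y c) c.
    move=> x y c /HD /andP [a b] _ /=; rewrite /nxt /up; case: c; case: y; lia.
  have := @fin_inv (fun x _ => (- K%:Z <= x) && (x <= K%:Z + 1)) D h q s Hinv Hh.
  case: (fin D h q s) => h' q' /= /andP [H1 H2].
  have hp := p_gt0; have hp1 := p_lt1.
  have H1' : - (K%:R) <= h'%:~R :> R by rewrite -(ler_int R) in H1; move: H1; rewrite rmorphN.
  have H2' : h'%:~R <= K%:R + 1 :> R by rewrite -(ler_int R) in H2; move: H2; rewrite rmorphD.
  rewrite /M2 /M; case: q' => /=; nra.
lra.
Qed.


Definition Dpos (K : nat) : pred int := fun x => (0 < x) && (x < K%:Z).
Definition Dneg (K : nat) : pred int := fun x => (- K%:Z < x) && (x < 0).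

Lemma natrS' (n : nat) : (n.+1)%:R = n%:R + 1 :> R.
Proof. by rewrite -addn1 natrD. Qed.

Lemma pos_pw (K : nat) h q s : (0 < h) -> posok h q s ->
  (K%:R <= M (fin (Dpos K) h q s).1 (fin (Dpos K) h q s).2) \/
  ((size s)%:R <= acc (Dpos K) (dlt M2) h q s).
Proof.
elim: s h q => [|c s IH] h q hpos /=; first by right.
case Dh: (Dpos K h) => /=.
- move/andP => [hn hr]; case: (IH _ _ hn hr) => [l|r]; [by left | right].
  by rewrite natrS'; have := dltM2 h q; lra.
- move=> _; left; move: Dh; rewrite /Dpos hpos /= => /negbT; rewrite -leNgt => hK.
  have hK' : K%:R <= h%:~R :> R by rewrite -(ler_int R) in hK.
  have := p_gt0; rewrite /M; case: q => /=; lra.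
Qed.

Lemma neg_pw (K : nat) h q s : (h < 0) -> negok h q s ->
  (K%:R <= (1 + p) + (-1) * M (fin (Dneg K) h q s).1 (fin (Dneg K) h q s).2) \/
  ((size s)%:R <= acc (Dneg K) (dlt M2) h q s).
Proof.
elim: s h q => [|c s IH] h q hneg /=; first by right.
case Dh: (Dneg K h) => /=.
- move/andP => [hn hr]; case: (IH _ _ hn hr) => [l|r]; [by left | right].
  by rewrite natrS'; have := dltM2 h q; lra.
- move=> _; left; move: Dh; rewrite /Dneg hneg andbT => /negbT; rewrite -leNgt => hK.
  have hK' : h%:~R <= - K%:R :> R by rewrite -(ler_int R) rmorphN in hK.
  have := p_gt0; rewrite /M; case: q => /=; lra.
Qed.

Lemma pos_bound (K L : nat) : (2 <= K)%N -> (0 < L)%N ->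
  ES L (fun s => (posok 1 true s)%:R) <= (1 + p) / K%:R + (K%:R + 2) ^+ 2 / L%:R.
Proof.
move=> HK HL.
have hK : 0 < K%:R :> R by rewrite ltr0n; lia.
have hL : 0 < L%:R :> R by rewrite ltr0n.
have hKi : 0 < (K%:R : R)^-1 by rewrite invr_gt0.
have hLi : 0 < (L%:R : R)^-1 by rewrite invr_gt0.
have hKK : K%:R * (K%:R : R)^-1 = 1 by rewrite mulfV // gt_eqF.
have hLL : L%:R * (L%:R : R)^-1 = 1 by rewrite mulfV // gt_eqF.
apply: le_trans (ES_le (G := fun s => (K%:R)^-1 * M (fin (Dpos K) 1 true s).1 (fin (Dpos K) 1 true s).2
    + (L%:R)^-1 * acc (Dpos K) (dlt M2) 1 true s) _) _.
- move=> s Hs.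
  have hM : 0 <= M (fin (Dpos K) 1 true s).1 (fin (Dpos K) 1 true s).2.
    have := @fin_inv (fun x _ => 0 <= x) (Dpos K) 1 true s.
    case: (fin (Dpos K) 1 true s) => h' q' /= H.
    have {}H : 0 <= h' by apply: H => // x y c /andP [a b] _; rewrite /nxt /up; case: c; case: y; lia.
    have : 0 <= h'%:~R :> R by rewrite ler0z.
    have := p_gt0; rewrite /M; case: q' => /=; lra.
  have ha : 0 <= acc (Dpos K) (dlt M2) 1 true s.
    by apply: acc_ge0 => x y; apply: le_trans (dltM2 x y).
  case Hpo: (posok 1 true s) => /=; last by nra.
  case: (@pos_pw K 1 true s isT Hpo) => // H; last rewrite Hs in H; nra.
- rewrite ES_add !ES_scale lin_id.
  have := @quad_bound (Dpos K) K L 1 true.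
  have h1 : forall x, Dpos K x -> (- K%:Z < x) && (x < K%:Z).
    by move=> x /andP [a b]; lia.
  have h2 : (- K%:Z <= 1) && (1 <= K%:Z + 1) by lia.
  move=> /(_ h1 h2) hq.
  rewrite /M /=. 
  have : (L%:R)^-1 * ES L (acc (Dpos K) (dlt M2) 1 true) <= (L%:R)^-1 * (K%:R + 2) ^+ 2.
    by rewrite ler_pM2l.
  rewrite mulrC [(K%:R + 2) ^+ 2 / _]mulrC; lra.
Qed.

Lemma neg_bound (K L : nat) : (2 <= K)%N -> (0 < L)%N ->
  ES L (fun s => (negok (-1) false s)%:R) <= 3 / K%:R + (K%:R + 2) ^+ 2 / L%:R.
Proof.
move=> HK HL.
have hK : 0 < K%:R :> R by rewrite ltr0n; lia.
have hL : 0 < L%:R :> R by rewrite ltr0n.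
have hKi : 0 < (K%:R : R)^-1 by rewrite invr_gt0.
have hLi : 0 < (L%:R : R)^-1 by rewrite invr_gt0.
have hKK : K%:R * (K%:R : R)^-1 = 1 by rewrite mulfV // gt_eqF.
have hLL : L%:R * (L%:R : R)^-1 = 1 by rewrite mulfV // gt_eqF.
apply: le_trans (ES_le (G := fun s => (K%:R)^-1 * ((1 + p) + (-1) * M (fin (Dneg K) (-1) false s).1 (fin (Dneg K) (-1) false s).2)
    + (L%:R)^-1 * acc (Dneg K) (dlt M2) (-1) false s) _) _.
- move=> s Hs.
  have hM : 0 <= (1 + p) + (-1) * M (fin (Dneg K) (-1) false s).1 (fin (Dneg K) (-1) false s).2.
    have := @fin_inv (fun x _ => x <= 1) (Dneg K) (-1) false s.
    case: (fin (Dneg K) (-1) false s) => h' q' /= H.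
    have {}H : h' <= 1 by apply: H => // x y c /andP [a b] _; rewrite /nxt /up; case: c; case: y; lia.
    have : h'%:~R <= 1 :> R by rewrite lerz1.
    have := p_gt0; rewrite /M; case: q' => /=; lra.
  have ha : 0 <= acc (Dneg K) (dlt M2) (-1) false s.
    by apply: acc_ge0 => x y; apply: le_trans (dltM2 x y).
  case Hpo: (negok (-1) false s) => /=; last by nra.
  case: (@neg_pw K (-1) false s isT Hpo) => // H; last rewrite Hs in H; nra.
- rewrite ES_add !ES_scale ES_addc ES_scale lin_id.
  have := @quad_bound (Dneg K) K L (-1) false.
  have h1 : forall x, Dneg K x -> (- K%:Z < x) && (x < K%:Z).
    by move=> x /andP [a b]; lia.
  have h2 : (- K%:Z <= -1) && (-1 <= K%:Z + 1) by lia.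
  move=> /(_ h1 h2) hq.
  rewrite /M /=.
  have : (L%:R)^-1 * ES L (acc (Dneg K) (dlt M2) (-1) false) <= (L%:R)^-1 * (K%:R + 2) ^+ 2.
    by rewrite ler_pM2l.
  have E1 : ((1:int)%:~R : R) = 1 by [].
  rewrite mulrC [(K%:R + 2) ^+ 2 / _]mulrC [3 / _]mulrC rmorphN /= E1; have := p_lt1; nra.
Qed.


Lemma ES_andb N (b : bool) (F : seq bool -> bool) :
  ES N (fun s => ((b && F s) : bool)%:R) = (b : bool)%:R * ES N (fun s => (F s)%:R).
Proof.
case: b => /=; first by rewrite mul1r.
by rewrite mul0r -(ES_const N 0); apply: ES_ext.
Qed.

Lemma ES_ind_ge0 N (F : seq bool -> bool) : 0 <= ES N (fun s => (F s)%:R).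
Proof. by apply: ES_ge0 => s _; rewrite ler0n. Qed.

Lemma ES_ind_le1 N (F : seq bool -> bool) : ES N (fun s => (F s)%:R) <= 1.
Proof. apply: le_trans (ES_le (G := fun _ => 1) _) _; last by rewrite ES_const. by move=> s _; case: (F s); rewrite /= ?lexx ?ler01. Qed.

Lemma ES_ok_step n h q : ES n.+1 (fun s => (ok h q s)%:R) =
  p * (((nxt h q true != 0)%R : bool)%:R * ES n (fun s => (ok (nxt h q true) true s)%:R)) +
  (1 - p) * (((nxt h q false != 0)%R : bool)%:R * ES n (fun s => (ok (nxt h q false) false s)%:R)).
Proof. by rewrite /= !ES_andb. Qed.

Lemma ES_negok_step n h q : ES n.+1 (fun s => (negok h q s)%:R) =
  p * (((nxt h q true < 0)%R : bool)%:R * ES n (fun s => (negok (nxt h q true) true s)%:R)) +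
  (1 - p) * (((nxt h q false < 0)%R : bool)%:R * ES n (fun s => (negok (nxt h q false) false s)%:R)).
Proof. by rewrite /= !ES_andb. Qed.

Lemma ok_mono N h q : ES N.+1 (fun s => (ok h q s)%:R) <= ES N (fun s => (ok h q s)%:R).
Proof.
elim: N h q => [|N IH] h q; first exact: ES_ind_le1.
have hp := p_gt0; have hp1 := p_lt1.
rewrite ES_ok_step [X in _ <= X]ES_ok_step.
apply: lerD; rewrite ler_wpM2l //; try lra; rewrite ler_wpM2l ?ler0n //.
Qed.

Lemma ok_mono_le n N h q : (n <= N)%N ->
  ES N (fun s => (ok h q s)%:R) <= ES n (fun s => (ok h q s)%:R).
Proof.
move=> /subnK <-; elim: (N - n)%N => [|k IH]; first by rewrite add0n.
by rewrite addSn; apply: le_trans (ok_mono _ _ _) IH.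
Qed.

Lemma ok_posok h q s : 0 < h -> ok h q s -> posok h q s.
Proof.
elim: s h q => [|c s IH] h q //= hpos /andP [h1 h2].
have h3 : 0 < nxt h q c by clear IH h2; move: h1 hpos; rewrite /nxt /up; case: c; case: q; lia.
by rewrite h3 /=; apply: IH.
Qed.

Lemma split_neg m N h q : (m <= N)%N -> h < 0 ->
  ES N (fun s => (ok h q s)%:R) <=
  ES m (fun s => (negok h q s)%:R) + ES (N - m) (fun s => (ok 1 true s)%:R).
Proof.
have hp := p_gt0; have hp1 := p_lt1.
elim: m N h q => [|m IH] N h q hmN hneg.
  rewrite subn0 /=; have := ES_ind_le1 N (ok h q); have := ES_ind_ge0 N (ok 1 true); have e : ((true : nat)%:R : R) = 1 by []. rewrite e; lra.
case: N hmN => [//|N] hmN; rewrite ltnS in hmN.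
rewrite ES_ok_step ES_negok_step subSS.
set E := ES (N - m) _.
have hE : 0 <= E by apply: ES_ind_ge0.
have A : ((nxt h q true != 0)%R : bool)%:R * ES N (fun s => (ok (nxt h q true) true s)%:R) <=
   ((nxt h q true < 0)%R : bool)%:R * ES m (fun s => (negok (nxt h q true) true s)%:R) + E.
  have : (nxt h q true < 0) \/ (nxt h q true = 0) \/ (nxt h q true = 1).
    rewrite /nxt /up; case: q; lia.
  case=> [H|[H|H]].
  - rewrite H (_ : (nxt h q true != 0) = true) ?mul1r; last by move: H; lia.
    exact: IH.
  - by rewrite H eqxx ltxx !mul0r add0r.
  - rewrite H /= mul1r mul0r add0r; exact: ok_mono_le (leq_subr _ _).
have B : ES N (fun s => (ok (nxt h q false) false s)%:R) <=
   ES m (fun s => (negok (nxt h q false) false s)%:R) + E.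
  by apply: IH => //; rewrite /nxt; lia.
have -> : (nxt h q false != 0) = true by rewrite /nxt; lia.
have -> : (nxt h q false < 0) = true by rewrite /nxt; lia.
rewrite !mul1r.
have A' := ler_wpM2l (ltW hp) A.
have hp' : 0 <= 1 - p by lra.
have B' := ler_wpM2l hp' B.
lra.
Qed.

Lemma disc_main (K : nat) : (2 <= K)%N -> exists N, ES N (fun s => (ok 0 false s)%:R) <= 9 / K%:R.
Proof.
move=> HK.
have hp := p_gt0; have hp1 := p_lt1.
set m := (K * (K + 2) ^ 2)%N.
have hm : (0 < m)%N by rewrite /m muln_gt0 expn_gt0; lia.
exists (m + m).+1.
rewrite ES_ok_step.
have -> : (nxt 0 false true != 0) = true by [].
have e : ((true : nat)%:R : R) = 1 by [].
rewrite e !mul1r.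

have P1 : ES (m + m) (fun s => (ok (nxt 0 false true) true s)%:R) <= (1 + p) / K%:R + (K%:R + 2) ^+ 2 / m%:R.
  apply: le_trans (ok_mono_le _ _ (leq_addr m m)) _.
  apply: le_trans (pos_bound HK hm).
  apply: ES_le => s _; case Ho: (ok _ true s); last by rewrite ler0n.
  by rewrite (@ok_posok 1 true s isT Ho).
have P2 : ES (m + m) (fun s => (ok (nxt 0 false false) false s)%:R) <=
   3 / K%:R + (K%:R + 2) ^+ 2 / m%:R + ((1 + p) / K%:R + (K%:R + 2) ^+ 2 / m%:R).
  apply: le_trans (split_neg false (leq_addr m m) (isT : nxt 0 false false < 0)) _.
  rewrite addnK; apply: lerD; first exact: neg_bound.
  apply: le_trans (ok_mono_le _ _ (leqnn m)) _.
  apply: le_trans (pos_bound HK hm).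
  apply: ES_le => s _; case Ho: (ok _ true s); last by rewrite ler0n.
  by rewrite (@ok_posok 1 true s isT Ho).
have hK : 0 < K%:R :> R by rewrite ltr0n; lia.
have Em : (K%:R + 2) ^+ 2 / m%:R = 1 / K%:R :> R.
  rewrite /m natrM natrX natrD; field.
  have h2 : 0 < K%:R + 2 :> R by lra.
  by rewrite (gt_eqF hK) (gt_eqF h2).
rewrite Em in P1 P2.
have hKi : 0 < 1 / K%:R :> R by rewrite divr_gt0.
have e1 : (1 + p) / K%:R = (1 + p) * (1 / K%:R) :> R by rewrite mul1r.
have e3 : 3 / K%:R = 3 * (1 / K%:R) :> R by rewrite mul1r.
have e9 : 9 / K%:R = 9 * (1 / K%:R) :> R by rewrite mul1r.
rewrite e1 e3 in P1 P2; rewrite e9.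
set x := 1 / K%:R in P1 P2 hKi *.
have X1 := ES_ind_ge0 (m + m) (ok (nxt 0 false true) true).
have X2 := ES_ind_ge0 (m + m) (ok (nxt 0 false false) false).
nra.
Qed.

End Discrete.

Section Comb.
Variable R : realType.

Definition wb (c : bool) : R := if c then pp R else 1 - pp R.
Definition Wt (s : seq bool) : R := \prod_(c <- s) wb c.

Fixpoint allseq (N : nat) : seq (seq bool) :=
  if N is N'.+1 then [seq true :: s | s <- allseq N'] ++ [seq false :: s | s <- allseq N']
  else [:: [::]].

Lemma allseq_size N s : s \in allseq N -> size s = N.
Proof.
elim: N s => [|N IH] s /=; first by rewrite inE => /eqP ->.
by rewrite mem_cat => /orP [] /mapP [s' /IH H ->] /=; rewrite H.
Qed.

Lemma allseq_mem N s : size s = N -> s \in allseq N.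
Proof.
elim: N s => [|N IH] [|c s] //= [Hs]; rewrite mem_cat.
by case: c; [rewrite map_f ?IH | rewrite orbC map_f ?IH].
Qed.

Lemma allseq_uniq N : uniq (allseq N).
Proof.
elim: N => [|N IH] //=; rewrite cat_uniq !map_inj_uniq //; try by move=> ?? [].
rewrite IH andbT /=; apply/hasPn => s /mapP [s' _ ->]; apply/mapP => [[s'' _]] //.
Qed.

Lemma ES_sum N F : ES N F = \sum_(s <- allseq N) F s * Wt s.
Proof.
elim: N F => [|N IH] F /=; first by rewrite big_seq1 /Wt big_nil mulr1.
rewrite big_cat !big_map !IH !mulr_sumr; congr (_ + _); apply: eq_bigr => s _;
  rewrite /Wt big_cons /wb /=; ring.
Qed.

End Comb.

Section Meas.
Variables (R : realType) (d : measure_display) (T : measurableType d)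
  (P : probability T R) (xi : nat -> T -> R).
Hypotheses (hm : forall i, measurable_fun setT (xi i))
  (hind : mutually_independent P xi)
  (hpm : forall i t, xi i t = 1 \/ xi i t = -1)
  (hp : forall i, P [set t | xi i t = 1] = (Num.sqrt 2 - 1)%:E).

Definition bits N t := [seq (xi i t == 1) | i <- iota 0 N].
Lemma size_bits N t : size (bits N t) = N.
Proof. by rewrite size_map size_iota. Qed.

Lemma meas_pre i (B : set R) : measurable B -> measurable (xi i @^-1` B).
Proof. by move=> mB; have := hm i measurableT mB; rewrite setTI. Qed.

Definition sg (c : bool) : R := if c then 1 else -1.

Lemma P_one i c : P (xi i @^-1` [set sg c]) = (wb R c)%:E.
Proof.
case: c; first exact: hp.
have U : setT = xi i @^-1` [set 1] `|` xi i @^-1` [set -1].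
  apply/seteqP; split => [t _|t _ //]; case: (hpm i t) => H; [left|right]; exact: H.
have D : xi i @^-1` [set 1] `&` xi i @^-1` [set -1] = set0.
  apply/seteqP; split => [t [H1 H2]|t //].
  have : (1:R) = -1 by transitivity (xi i t).
  lra.
have HU : P (xi i @^-1` [set 1] `|` xi i @^-1` [set -1]) = 1%E.
  by rewrite -U; exact: probability_setT.
have mA := meas_pre i (measurable_set1 1).
have mB := meas_pre i (measurable_set1 (-1)).
move: HU D mA mB; set A1 := xi i @^-1` [set 1]; set B1 := xi i @^-1` [set -1] => HU D mA mB.
have HU2 : (P A1 + P B1 = 1)%E := etrans (esym (measureU P mA mB D)) HU.
have HA : P A1 = (pp R)%:E := hp i.
move: HU2; rewrite HA /wb /pp.
case E: (P B1) => [r| |] //=.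
by rewrite -EFinD => -[H]; congr EFin; lra.
Qed.


Definition cyl N s := [set t | bits N t = s].

Lemma n11 : ((-1 : R) == 1) = false.
Proof. by apply/eqP; lra. Qed.

Lemma cyl_eq N s : size s = N ->
  cyl N s = \bigcap_(i in [set` iota 0 N]) (xi i @^-1` [set sg (nth false s i)]).
Proof.
move=> Hs; apply/seteqP; split => t /=.
- move=> <- i /=; rewrite mem_iota add0n => /andP [_ Hi].
  rewrite (nth_map 0) ?size_iota // nth_iota // add0n.
  by case: (hpm i t) => ->; rewrite /sg ?eqxx ?n11.
- move=> H; apply: (@eq_from_nth _ false); rewrite ?size_bits // => i Hi.
  rewrite (nth_map 0) ?size_iota // nth_iota // add0n.
  have := H i; rewrite /= mem_iota add0n Hi => /(_ isT) ->.
  by case: (nth false s i); rewrite /sg ?eqxx ?n11.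
Qed.

Lemma cyl_meas N s : size s = N -> measurable (cyl N s).
Proof.
move=> Hs; rewrite cyl_eq //; apply: bigcap_measurableType => i _.
exact: meas_pre (measurable_set1 _).
Qed.

Lemma cyl_prob N s : size s = N -> P (cyl N s) = (Wt R s)%:E.
Proof.
move=> Hs; rewrite cyl_eq // hind ?iota_uniq //; try by move=> i _; apply: measurable_set1.
rewrite (eq_bigr (fun i => (wb R (nth false s i))%:E)); last by move=> i _; apply: P_one.
rewrite prodEFin; congr EFin.
by rewrite /Wt (big_nth false) Hs /index_iota subn0.
Qed.

Lemma union_prob N (F : seq bool -> bool) (L : seq (seq bool)) : uniq L ->
  (forall s, s \in L -> size s = N) ->
  measurable [set t | (bits N t \in L) && F (bits N t)] /\
  P [set t | (bits N t \in L) && F (bits N t)] = (\sum_(s <- L) (F s)%:R * Wt R s)%:E.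
Proof.
elim: L => [|x L IH] /= uL HL.
  have -> : [set t | (bits N t \in [::]) && F (bits N t)] = set0.
    by apply/seteqP; split => t //=; rewrite in_nil.
  by rewrite big_nil; split; [exact: measurable0 | exact: measure0].
move/andP: uL => [xL uL].
have [IH1 IH2] := IH uL (fun s Hs => HL s (etrans (in_cons x L s) (introT orP (or_intror Hs)))) .
have Hx : size x = N by apply: HL; rewrite mem_head.
set C := if F x then cyl N x else set0.
have -> : [set t | (bits N t \in x :: L) && F (bits N t)] =
    C `|` [set t | (bits N t \in L) && F (bits N t)].
  apply/seteqP; split => t /=; rewrite in_cons.
  - case/andP => /orP [/eqP E|H] HF; last by right; rewrite H HF.
    by left; rewrite /C -E HF.
  - rewrite /C; case => [|/andP [H1 H2]]; last by rewrite H1 orbT H2.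
    by case Fx: (F x) => // E; rewrite /cyl /= in E; rewrite E eqxx Fx.
have mC : measurable C by rewrite /C; case: (F x); [exact: cyl_meas | exact: measurable0].
have Dj : C `&` [set t | (bits N t \in L) && F (bits N t)] = set0.
  apply/seteqP; split => t //=; rewrite /C; case: (F x) => //=; last by case.
  by move=> [E /andP [H _]]; rewrite /cyl /= in E; move: xL; rewrite -E H.
split; first exact: measurableU.
have HU : P (C `|` [set t | (bits N t \in L) && F (bits N t)]) =
   (P C + P [set t | (bits N t \in L) && F (bits N t)])%E := measureU P mC IH1 Dj.
rewrite HU IH2 big_cons /C; case Fx: (F x).
- by rewrite cyl_prob // -EFinD mul1r.
- by rewrite measure0 add0e mul0r add0r.
Qed.

Lemma E_prob N (F : seq bool -> bool) :
  measurable [set t | F (bits N t)] /\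
  P [set t | F (bits N t)] = (ES N (fun s => (F s)%:R))%:E.
Proof.
have := union_prob F (allseq_uniq N) (@allseq_size N).
have -> : [set t | (bits N t \in allseq N) && F (bits N t)] = [set t | F (bits N t)].
  by apply/seteqP; split => t /=; rewrite allseq_mem ?size_bits.
by rewrite ES_sum.
Qed.

End Meas.

Fixpoint lvl (h : int) (q : bool) (s : seq bool) : int :=
  if s is c :: s' then lvl (nxt h q c) c s' else h.

Lemma lvl_rcons h q s c : lvl h q (rcons s c) = nxt (lvl h q s) (last q s) c.
Proof. by elim: s h q => [|c' s IH] h q //=. Qed.

Lemma ok_rcons h q s c :
  ok h q (rcons s c) = ok h q s && (nxt (lvl h q s) (last q s) c != 0).
Proof.
elim: s h q => [|c' s IH] h q /=; first by rewrite andbT.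
by rewrite IH andbA.
Qed.

Lemma nxtR (R : realType) h q c :
  (nxt h q c)%:~R = h%:~R + (if c then (if q then 2 else 1) else -1) :> R.
Proof. by rewrite /nxt /up; case: c; case: q; rewrite ?intrD ?intrB. Qed.





Section Link.
Variables (R : realType) (d : measure_display) (T : measurableType d) (xi : nat -> T -> R).
Hypothesis hpm : forall i t, xi i t = 1 \/ xi i t = -1.

Lemma bitsS N t : bits xi N.+1 t = rcons (bits xi N t) (xi N t == 1).
Proof. by rewrite /bits -addn1 iotaD map_cat /= cats1 add0n. Qed.

Lemma lastb N t : last false (bits xi N t) = if N is N'.+1 then xi N' t == 1 else false.
Proof. by case: N => [//|N]; rewrite bitsS last_rcons. Qed.

Lemma n11' : ((1 : R) == -1) = false.
Proof. by apply/eqP; lra. Qed.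

Lemma X_eq t k : ladder_X 2 2 (fun j => xi j t) k =
  if (xi k t == 1) then (if k is k'.+1 then (if xi k' t == 1 then 2 else 1) else 1) else -1.
Proof.
rewrite /ladder_X; case: (hpm k t) => Hk; rewrite Hk ?eqxx ?n11' ?n11 //=.
case: k Hk => [|k] Hk //=.
have -> : [forall j : 'I_2, xi (k.+1 - j)%N t == 1] = (xi k t == 1).
  apply/forallP/idP => [H|H j].
    by have := H (Ordinal (isT : (1 < 2)%N)); rewrite /= subSS subn0.
  case: j => [[|[|j]]] //= _; first by rewrite subn0 Hk eqxx.
  by rewrite subSS subn0.
by [].
Qed.

Lemma S_eq t N : ladder_S 2 2 (fun j => xi j t) N = (lvl 0 false (bits xi N t))%:~R.
Proof.
elim: N => [|N IH]; first by rewrite /ladder_S big_ord0.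
have E : ladder_S 2 2 (fun j => xi j t) N.+1 =
  ladder_S 2 2 (fun j => xi j t) N + ladder_X 2 2 (fun j => xi j t) N.
  by rewrite /ladder_S big_ord_recr.
rewrite E IH bitsS lvl_rcons nxtR X_eq lastb.
by clear E IH; case: N.
Qed.

Lemma ok_bits t N : ok 0 false (bits xi N t) <->
  (forall n, (0 < n <= N)%N -> lvl 0 false (bits xi n t) != 0).
Proof.
elim: N => [|N IH].
  by split => // _ n /andP [a b]; move: a b; case: n.
rewrite bitsS ok_rcons -lvl_rcons -bitsS; split.
- case/andP => /IH H1 H2 n /andP [h0 hn].
  have [->|ne] := eqVneq n N.+1; first exact: H2.
  by apply: H1; rewrite h0 /=; move: hn ne; lia.
- move=> H; rewrite (H N.+1) ?andbT; last by lia.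
  by apply/IH => n /andP [a b]; apply: H; rewrite a /=; lia.
Qed.

End Link.

Unset Implicit Arguments. Set Strict Implicit.

Theorem theorem4p4 (R : realType) (d : measure_display) (T : measurableType d)
  (P : probability T R) (xi : nat -> T -> R) :
  (forall i, measurable_fun setT (xi i)) ->
  mutually_independent P xi ->
  (forall i t, xi i t = 1 \/ xi i t = -1) ->
  (forall i, P [set t | xi i t = 1] = (Num.sqrt 2 - 1)%:E) ->
  P [set t | forall n : nat, (0 < n)%N ->
               ladder_S 2 2 (fun j => xi j t) n != 0] = 0%E.
Proof.
move=> hm hind hpm hp.
set A := [set t | _].
have AE : A = \bigcap_N [set t | ok 0 false (bits xi N t)].
  apply/seteqP; split => t /=.
  - move=> H N _ /=; apply/(ok_bits xi t N) => n /andP [n0 _].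
    by have := H n n0; rewrite (S_eq hpm) intr_eq0.
  - move=> H n n0; have /(ok_bits xi t n) := H n I.
    by move=> /(_ n); rewrite n0 leqnn (S_eq hpm) intr_eq0 => /(_ isT).
have mA : measurable A.
  by rewrite AE; apply: bigcapT_measurable => N; case: (E_prob hm hind hpm hp N (ok 0 false)).
have bound : forall K, (2 <= K)%N -> (P A <= (9 / K%:R)%:E)%E.
  move=> K HK; have [N HN] := disc_main R HK.
  have [mE PE] := E_prob hm hind hpm hp N (ok 0 false).
  have sub : A `<=` [set t | ok 0 false (bits xi N t)].
    by rewrite AE => t H; exact: H N I.
  have LE : (P A <= P [set t | ok 0 false (bits xi N t)])%E :=
    le_measure P (mem_set mA) (mem_set mE) sub.
  apply: le_trans LE _.
  by rewrite PE lee_fin.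
have P0 : (0 <= P A)%E := measure_ge0 P A.
have B2 := bound 2%N isT.
move: P0 B2 bound; case: (P A) => [r| |] //= r0 _ Hb.
rewrite lee_fin in r0; congr EFin.
apply/eqP; rewrite eq_le r0 andbT leNgt; apply/negP => rpos.
set K := (Num.truncn (9 / r)).+2.
have := Hb K isT; rewrite lee_fin => HK.
have h1 : 9 / r < K%:R.
  apply: lt_le_trans (truncnS_gt (9 / r)) _.
  by rewrite ler_nat /K.
have hK : 0 < K%:R :> R by rewrite ltr0n.
rewrite ltr_pdivrMr // in h1.
rewrite ler_pdivlMr // mulrC in HK.
by have := lt_le_trans h1 HK; rewrite ltxx.
Qed.
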